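(* Let $(\vdash,\overline{\cdot},\widehat{\cdot})$ be a setting and let $\vdash^{\emptyset}$ be the restriction of $\vdash$ to those pairs $(\Gamma,\gamma)$ for which there is no $(\emptyset,\delta)\in{\vdash}$ with $\delta\in\overline{\psi}$ for some $\psi\in\widehat{\Gamma}$. Then for $\mathsf{Sem}\in\{\mathsf{Grd},\mathsf{Prf}\}$, every $\mathcal{S}\subseteq\mathcal{L}$ and every $\phi$: $\mathcal{S}\mathrel{\mid\!\sim}^{(\vdash,\overline{\cdot},\widehat{\cdot})}_{\mathsf{Sem}}\phi$ iff $\mathcal{S}\mathrel{\mid\!\sim}^{(\vdash^{\emptyset},\overline{\cdot},\widehat{\cdot})}_{\mathsf{Sem}}\phi$.
   Context: $\mathcal{L}$ is a set of formulas; $\wp_{\sf fin}(X)$ is the set of finite subsets of $X$. A setting is a triple $(\vdash,\overline{\cdot},\widehat{\cdot})$ with ${\vdash}\subseteq\wp_{\sf fin}(\mathcal{L})\times\mathcal{L}$ arbitrary, $\overline{\cdot}:\mathcal{L}\to\wp(\mathcal{L})$, and $\widehat{\cdot}$ assigning to each nonempty finite set of formulas a finite set of formulas, with $\widehat{\emptyset}=\emptyset$ (so arguments with empty support have no attackers). For $\mathcal{S}\subseteq\mathcal{L}$, $\mathit{Arg}_{\vdash}(\mathcal{S})=\{(\Gamma,\gamma):\Gamma\subseteq\mathcal{S}\text{ finite},\Gamma\vdash\gamma\}$; $\mathsf{Conc}((\Gamma,\gamma))=\gamma$. In $\mathcal{AF}_{\vdash}(\mathcal{S})$, $(\Gamma,\gamma)$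 attacks $(\Gamma',\gamma')$ iff $\gamma\in\overline{\phi}$ for some $\phi\in\widehat{\Gamma'}$. Dung semantics on $\mathit{Arg}_{\vdash}(\mathcal{S})$: conflict-free, defends (every attacker is attacked by a member), admissible (conflict-free and defends its members), complete (admissible and contains all it defends), preferred ($\subseteq$-maximal complete), grounded ($\subseteq$-minimal complete). $\mathcal{S}\mathrel{\mid\!\sim}^{\mathcal{AF}}_{\mathsf{Sem}}\phi$ iff every $\mathsf{Sem}$-extension of $\mathcal{AF}(\mathcal{S})$ contains an argument with conclusion $\phi$. *)

(* Defs.v *)
From HB Require Import structures.
From mathcomp Require Import all_boot finmap.
Set Implicit Arguments. Unset Strict Implicit. Unset Printing Implicit Defensive.
Local Open Scope fset_scope.

Section AF.
Variable A : Type.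
Variable args : A -> Prop.
Variable att : A -> A -> Prop.      (* attack relation, restricted to args *)

Definition ext_in (E : A -> Prop) := forall a, E a -> args a.
Definition conflict_free (E : A -> Prop) :=
  forall a b, E a -> E b -> ~ att a b.
Definition defends (E : A -> Prop) (a : A) :=
  forall b, args b -> att b a -> exists2 c, E c & att c b.
Definition admissible (E : A -> Prop) :=
  ext_in E /\ conflict_free E /\ (forall a, E a -> defends E a).
Definition complete (E : A -> Prop) :=
  admissible E /\ (forall a, args a -> defends E a -> E a).
Definition subsetP (E F : A -> Prop) := forall a, E a -> F a.
Definition grounded (E : A -> Prop) :=
  complete E /\ (forall F, complete F -> subsetP F E -> subsetP E F).
Definition preferred (E : A -> Prop) :=
  complete E /\ (forall F, complete F -> subsetP E F -> subsetP F E).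
End AF.

Inductive semantics := Grd | Prf.

Definition sem_ext (s : semantics) A (args : A -> Prop) (att : A -> A -> Prop)
  (E : A -> Prop) : Prop :=
  match s with
  | Grd => grounded args att E
  | Prf => preferred args att E
  end.

Section Setting.
Variable L : choiceType.
Variable vdash : {fset L} -> L -> Prop.
Variable bar : L -> L -> Prop.      (* bar phi delta  <->  delta \in overline(phi) *)
Variable hat : {fset L} -> {fset L}. (* with hat fset0 = fset0 (hypothesis) *)

Definition argument : Type := ({fset L} * L)%type.

Definition Arg (S : L -> Prop) (a : argument) : Prop :=
  (forall x, x \in a.1 -> S x) /\ vdash a.1 a.2.

Definition attacks (S : L -> Prop) (a b : argument) : Prop :=
  Arg S a /\ Arg S b /\ exists2 phi, phi \in hat b.1 & bar phi a.2.

Definition entails (s : semantics) (S : L -> Prop) (phi : L) : Prop :=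
  forall E : argument -> Prop, sem_ext s (Arg S) (attacks S) E ->
    exists2 a, E a & a.2 = phi.
End Setting.

Definition vdash_empty (L : choiceType) (vdash : {fset L} -> L -> Prop)
  (bar : L -> L -> Prop) (hat : {fset L} -> {fset L}) : {fset L} -> L -> Prop :=
  fun G g => vdash G g /\
    ~ (exists delta, vdash fset0 delta /\ exists2 psi, psi \in hat G & bar psi delta).

(* Main.v *)
Require Import Defs.
From mathcomp Require Import all_boot finmap.
From Stdlib Require Classical_Prop.
Local Open Scope fset_scope.

Set Implicit Arguments.
Section Pf.
Variables (L : choiceType) (vdash : {fset L} -> L -> Prop)
  (bar : L -> L -> Prop) (hat : {fset L} -> {fset L})
  (hat0 : hat fset0 = fset0) (S : L -> Prop).

Let v2 := vdash_empty vdash bar hat.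
Let A1 := Arg vdash S.
Let A2 := Arg v2 S.
Let T1 := attacks vdash bar hat S.
Let T2 := attacks v2 bar hat S.

Lemma A21 a : A2 a -> A1 a.
Proof. by case=> H [H1 _]; split. Qed.

Lemma T21 a b : T2 a b -> T1 a b.
Proof. by case=> /A21 H [/A21 H1 H2]; split. Qed.

Lemma T12 a b : A2 a -> A2 b -> T1 a b -> T2 a b.
Proof. by move=> H1 H2 [_ [_ H]]; split. Qed.

Lemma empA2 d : vdash fset0 d -> A2 (fset0, d).
Proof.
move=> H; split=> [x|]; first by rewrite in_fset0.
split=> // [[dl [_ [psi]]]] /=; by rewrite hat0 in_fset0.
Qed.

Lemma empNatt1 d b : ~ T1 b (fset0, d).
Proof. by case=> _ [_ [psi]] /=; rewrite hat0 in_fset0. Qed.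

Lemma bad a : A1 a -> ~ A2 a ->
  exists2 d, vdash fset0 d & T1 (fset0, d) a.
Proof.
move=> [Hs Hv] N.
have [Hb|Hb] := Classical_Prop.classic (exists delta, vdash fset0 delta /\
   exists2 psi, psi \in hat a.1 & bar psi delta).
- case: Hb => d [Hd [psi Hp Hb]]; exists d => //; split.
    by split=> // x; rewrite in_fset0.
  by split; [split|exists psi].
- by exfalso; apply: N; split.
Qed.

Lemma c1_emp E d : complete A1 T1 E -> vdash fset0 d -> E (fset0, d).
Proof.
move=> [_ Hc] Hd; apply: Hc; first by apply: A21; apply: empA2.
by move=> b _ /empNatt1.
Qed.

Lemma c2_emp E d : complete A2 T2 E -> vdash fset0 d -> E (fset0, d).
Proof.
move=> [_ Hc] Hd; apply: Hc; first exact: empA2.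
by move=> b _ /T21 /empNatt1.
Qed.

Lemma c12 E : complete A1 T1 E -> complete A2 T2 E.
Proof.
move=> Hc; have Hc' := Hc; move: Hc' => [[Hin [Hcf Hdef]] Hcomp].
have Hin2 : ext_in A2 E.
  move=> a Ea; have [//|N] := Classical_Prop.classic (A2 a).
  have [d Hd Hat] := bad (Hin a Ea) N.
  by exfalso; apply: (Hcf _ _ (c1_emp Hc Hd) Ea).
split; first split => //; first split.
- by move=> a b Ea Eb /T21; apply: Hcf.
- move=> a Ea b Hb /T21 Hba; have [c Ec Hcb] := Hdef a Ea b (A21 Hb) Hba.
  by exists c => //; apply: T12 => //; apply: Hin2.
- move=> a Ha Hd; apply: Hcomp; first exact: A21.
  move=> b Hb Hba; have [Hb2|N] := Classical_Prop.classic (A2 b).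
    have [c Ec Hcb] := Hd b Hb2 (T12 Hb2 Ha Hba).
    by exists c => //; apply: T21.
  have [d Hd0 Hat] := bad Hb N; exists (fset0, d) => //; exact: c1_emp.
Qed.

Lemma c21 E : complete A2 T2 E -> complete A1 T1 E.
Proof.
move=> Hc; have Hc' := Hc; move: Hc' => [[Hin [Hcf Hdef]] Hcomp].
split; first split; first by move=> a /Hin /A21.
  split.
  - by move=> a b Ea Eb /(T12 (Hin a Ea) (Hin b Eb)); apply: Hcf.
  - move=> a Ea b Hb Hba; have [Hb2|N] := Classical_Prop.classic (A2 b).
      have [c Ec Hcb] := Hdef a Ea b Hb2 (T12 Hb2 (Hin a Ea) Hba).
      by exists c => //; apply: T21.
    have [d Hd0 Hat] := bad Hb N; exists (fset0, d) => //; exact: c2_emp.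
move=> a Ha Hd.
have Ha2 : A2 a.
  have [//|N] := Classical_Prop.classic (A2 a).
  have [d Hd0 Hat] := bad Ha N.
  have [c _ Hc0] := Hd _ (A21 (empA2 Hd0)) Hat.
  by case: (empNatt1 Hc0).
apply: Hcomp => // b Hb Hba.
have [c Ec Hcb] := Hd b (A21 Hb) (T21 Hba).
by exists c => //; apply: T12 => //; apply: Hin.
Qed.

Lemma semeq s E : sem_ext s A1 T1 E <-> sem_ext s A2 T2 E.
Proof.
case: s => /=; rewrite /grounded /preferred; split.
- by case=> /c12 H1 H2; split=> // F /c21; apply: H2.
- by case=> /c21 H1 H2; split=> // F /c12; apply: H2.
- by case=> /c12 H1 H2; split=> // F /c21; apply: H2.
- by case=> /c21 H1 H2; split=> // F /c12; apply: H2.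
Qed.
End Pf.
Unset Implicit Arguments.

Theorem lemma1 (L : choiceType) (vdash : {fset L} -> L -> Prop)
  (bar : L -> L -> Prop) (hat : {fset L} -> {fset L})
  (hat0 : hat fset0 = fset0)
  (s : semantics) (S : L -> Prop) (phi : L) :
  entails vdash bar hat s S phi <->
  entails (vdash_empty vdash bar hat) bar hat s S phi.
Proof.
split=> H E HE; apply: H.
- exact: (proj2 (semeq vdash bar hat hat0 S s E) HE).
- exact: (proj1 (semeq vdash bar hat hat0 S s E) HE).
Qed.
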